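(* Let $\mathcal H=\mathcal H_A\otimes\mathcal H_B\otimes\mathcal H_C\otimes\mathcal H_D$ with finite-dimensional factors, and let $|\Psi\rangle=|\psi\rangle\otimes|\phi\rangle$, where $|\psi\rangle$ is a unit vector in the tensor product of three of the four factors and $|\phi\rangle$ is a unit vector in the remaining factor. Then for all $\alpha,\beta>0$, $\langle\Psi|\rho_{AB}^\alpha\rho_{BC}^\beta|\Psi\rangle>0$; in particular $\omega_{\alpha,\beta}(|\Psi\rangle)=1$.
   Context: $\rho_R$ is the reduced density operator of $|\Psi\rangle\langle\Psi|$ on the factors in $R$ (acting as identity on the others), $AB$ means $A\cup B$, etc. Powers are defined by spectral calculus with $0^\alpha=0$. $\omega_{\alpha,\beta}=\langle\rho_{AB}^\alpha\rho_{BC}^\beta\rangle/|\langle\rho_{AB}^\alpha\rho_{BC}^\beta\rangle|$. *)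

(* Defs.v *)
From HB Require Import structures.
From mathcomp Require Import all_boot all_order all_algebra.
From mathcomp Require Import boolp reals exp.
From mathcomp Require Import complex.
Set Implicit Arguments. Unset Strict Implicit. Unset Printing Implicit Defensive.
Import Order.TTheory GRing.Theory Num.Theory.
Local Open Scope ring_scope.

(* Basis index set of H = H_A (x) H_B (x) H_C (x) H_D, dim H_A = a, etc. *)
Definition idx (a b c d : nat) : finType := ('I_a * 'I_b * 'I_c * 'I_d)%type.

Definition adjmx (R : rcfType) m n (A : 'M[R[i]]_(m, n)) : 'M[R[i]]_(n, m) :=
  (map_mx Num.conj A)^T.

Definition unitarymx (R : rcfType) n (U : 'M[R[i]]_n) : Prop :=
  U *m adjmx U = 1%:M /\ adjmx U *m U = 1%:M.

Definition psd_spectral (R : rcfType) n (M : 'M[R[i]]_n)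
    (Ud : 'M[R[i]]_n * 'rV[R]_n) : Prop :=
  unitarymx Ud.1 /\ (forall j, 0 <= Ud.2 0 j) /\
  M = Ud.1 *m diag_mx (map_mx (fun x : R => Complex x 0) Ud.2) *m adjmx Ud.1.

(* Spectral calculus: M^alpha := U diag(d_j^alpha) U^*, with 0^alpha = 0
   for alpha <> 0 (powR convention).  Independent of the chosen
   decomposition; only used on positive semidefinite matrices (otherwise 0). *)
Definition mxpowR (R : realType) n (M : 'M[R[i]]_n) (alpha : R) : 'M[R[i]]_n :=
  match pselect (exists Ud, psd_spectral M Ud) with
  | left H => let Ud := projT1 (cid H) in
      Ud.1 *m diag_mx (map_mx (fun x : R => Complex (powR x alpha) 0) Ud.2) *m adjmx Ud.1
  | right _ => 0
  end.

Definition opmx (R : rcfType) (T : finType) (f : T -> T -> R[i]) : 'M[R[i]]_#|T| :=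
  \matrix_(i, j) f (enum_val i) (enum_val j).

Definition vecmx (R : rcfType) (T : finType) (v : T -> R[i]) : 'cV[R[i]]_#|T| :=
  \col_i v (enum_val i).

Definition expect (R : rcfType) (T : finType) (Psi : T -> R[i]) (X : 'M[R[i]]_#|T|)
  : R[i] := (adjmx (vecmx Psi) *m X *m vecmx Psi) 0 0.

(* rho_AB (x) 1_CD, where rho_AB = Tr_CD |Psi><Psi| *)
Definition rhoAB (R : rcfType) a b c d (Psi : idx a b c d -> R[i]) : 'M[R[i]]_#|idx a b c d| :=
  opmx (fun i j : idx a b c d =>
    let: (x, y, z, w) := i in let: (x', y', z', w') := j in
    ((z == z') && (w == w'))%:R *
    \sum_(z0 : 'I_c) \sum_(w0 : 'I_d) Psi (x, y, z0, w0) * Num.conj (Psi (x', y', z0, w0))).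

(* rho_BC (x) 1_AD, where rho_BC = Tr_AD |Psi><Psi| *)
Definition rhoBC (R : rcfType) a b c d (Psi : idx a b c d -> R[i]) : 'M[R[i]]_#|idx a b c d| :=
  opmx (fun i j : idx a b c d =>
    let: (x, y, z, w) := i in let: (x', y', z', w') := j in
    ((x == x') && (w == w'))%:R *
    \sum_(x0 : 'I_a) \sum_(w0 : 'I_d) Psi (x0, y, z, w0) * Num.conj (Psi (x0, y', z', w0))).

Definition omega (R : realType) a b c d (Psi : idx a b c d -> R[i]) (alpha beta : R) : R[i] :=
  let z := expect Psi (mxpowR (rhoAB Psi) alpha *m mxpowR (rhoBC Psi) beta) in
  z / `|z|.

Definition unit_vec (R : rcfType) (T : finType) (v : T -> R[i]) : Prop :=
  \sum_(t : T) `|v t| ^+ 2 = 1.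

Definition split_product (R : rcfType) a b c d (Psi : idx a b c d -> R[i]) : Prop :=
  (exists (psi : 'I_b * 'I_c * 'I_d -> R[i]) (phi : 'I_a -> R[i]),
     unit_vec psi /\ unit_vec phi /\
     forall x y z w, Psi (x, y, z, w) = psi (y, z, w) * phi x) \/
  (exists (psi : 'I_a * 'I_c * 'I_d -> R[i]) (phi : 'I_b -> R[i]),
     unit_vec psi /\ unit_vec phi /\
     forall x y z w, Psi (x, y, z, w) = psi (x, z, w) * phi y) \/
  (exists (psi : 'I_a * 'I_b * 'I_d -> R[i]) (phi : 'I_c -> R[i]),
     unit_vec psi /\ unit_vec phi /\
     forall x y z w, Psi (x, y, z, w) = psi (x, y, w) * phi z) \/
  (exists (psi : 'I_a * 'I_b * 'I_c -> R[i]) (phi : 'I_d -> R[i]),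
     unit_vec psi /\ unit_vec phi /\
     forall x y z w, Psi (x, y, z, w) = psi (x, y, z) * phi w).

(* Main.v *)
Require Import Defs.
From HB Require Import structures.
From mathcomp Require Import all_boot all_order all_algebra.
From mathcomp Require Import boolp reals exp.
From mathcomp Require Import complex spectral sesquilinear ring.
Set Implicit Arguments. Unset Strict Implicit. Unset Printing Implicit Defensive.
Import Order.TTheory GRing.Theory Num.Theory.
Local Open Scope ring_scope.

Section P1.
Variable R : realType.
Local Notation C := R[i].

Lemma adjmxE m n (A : 'M[C]_(m,n)) : adjmx A = (A ^t*)%sesqui.
Proof. by rewrite /adjmx map_trmx. Qed.

Lemma adjmxK m n (A : 'M[C]_(m,n)) : adjmx (adjmx A) = A.
Proof. by apply/matrixP=> i j; rewrite !mxE conjCK. Qed.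

Lemma adjmx_mul m n p (A : 'M[C]_(m,n)) (B : 'M[C]_(n,p)) :
  adjmx (A *m B) = adjmx B *m adjmx A.
Proof. by rewrite /adjmx map_mxM trmx_mul. Qed.

Lemma spectral_exists n (M : 'M[C]_n) : adjmx M = M ->
  (forall u : 'cV_n, 0 <= (adjmx u *m M *m u) 0 0) -> exists Ud, psd_spectral M Ud.
Proof.
move=> hM pM.
have nM : M \is normalmx.
  by apply/normalmxP; rewrite -adjmxE hM.
have eM := elimT (@orthomx_spectralP _ n M) nM.
set P := spectralmx M in eM; set sp := spectral_diag M in eM.
have uP : P \is unitarymx by apply: spectral_unitarymx.
have PP : P *m (P ^t*)%sesqui = 1%:M by apply/unitarymxP.
have PP' : (P ^t*)%sesqui *m P = 1%:M by apply: mulmx1C.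
rewrite invmx_unitary // in eM.
set U := (P ^t*)%sesqui in PP PP' eM.
have aU : adjmx U = P by rewrite /U -adjmxE adjmxK.
have ediag : P *m M *m U = diag_mx sp.
  by rewrite eM !mulmxA PP mul1mx -mulmxA PP mulmx1.
have sp_ge0 : forall j, 0 <= sp 0 j.
  move=> j; have := pM (adjmx (row j P)); rewrite adjmxK.
  suff -> : (row j P *m M *m adjmx (row j P)) 0 0 = sp 0 j by [].
  have := congr1 (fun X : 'M[C]_n => X j j) ediag; rewrite /= => h; rewrite [diag_mx _ _ _]mxE eqxx mulr1n in h; rewrite -h.
  rewrite !mxE; apply: eq_bigr => k _; rewrite !mxE; congr (_ * _).
  by apply: eq_bigr => l _; rewrite !mxE.
exists (U, \row_j (@complex.Re R (sp 0 j))); split; [|split] => /=.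
- by split; rewrite aU.
- by move=> j; rewrite mxE; have := sp_ge0 j; rewrite lecE => /andP[].
- rewrite aU {1}eM; congr (_ *m diag_mx _ *m _); apply/matrixP => i j.
  rewrite ord1 !mxE; have := sp_ge0 j; rewrite lecE /= => /andP[/eqP h _].
  by move: h; case: (sp 0 j) => x y /= ->.
Qed.

End P1.

Section Interp.
Variable F : fieldType.
Lemma interp (f : F -> F) (s : seq F) :
  exists p : {poly F}, forall x, x \in s -> p.[x] = f x.
Proof.
elim: s => [|y s [p hp]]; first by exists 0.
case: (boolP (y \in s)) => ys.
  by exists p => x; rewrite inE => /orP[/eqP->|]; [apply: hp|apply: hp].
set q := \prod_(z <- s) ('X - z%:P).
have qy : q.[y] != 0.
  rewrite /q horner_prod prodf_seq_neq0; apply/allP => z zs /=.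
  by rewrite hornerXsubC subr_eq0; apply: contraNneq ys => ->.
have qx : forall x, x \in s -> q.[x] = 0.
  move=> x xs; rewrite /q horner_prod (big_rem x) //= hornerXsubC subrr mul0r //.
exists (p + ((f y - p.[y]) / q.[y]) *: q) => x; rewrite inE => /orP[/eqP->|xs].
  by rewrite hornerD hornerZ divfK // addrC subrK.
by rewrite hornerD hornerZ (qx x xs) mulr0 addr0 hp.
Qed.
End Interp.

Section P2.
Variable R : realType.
Local Notation C := R[i].

Definition mpow n (M : 'M[C]_n) k := iter k (mulmx M) 1%:M.
Definition pev n (M : 'M[C]_n) (p : {poly C}) :=
  \sum_(k < size p) p`_k *: mpow M k.

Lemma mpow_conj n (U D : 'M[C]_n) k :
  U *m adjmx U = 1%:M -> adjmx U *m U = 1%:M ->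
  mpow (U *m D *m adjmx U) k = U *m mpow D k *m adjmx U.
Proof.
move=> h1 h2; elim: k => [|k IH] /=; first by rewrite mulmx1 h1.
rewrite /mpow /= -/(mpow _ _) -/(mpow _ _) IH.
by rewrite !mulmxA -[U *m D *m adjmx U *m U]mulmxA h2 mulmx1.
Qed.

Lemma mpow_diag n (d : 'rV[C]_n) k :
  mpow (diag_mx d) k = diag_mx (\row_j (d 0 j ^+ k)).
Proof.
elim: k => [|k IH] /=.
  by apply/matrixP => i j; rewrite !mxE expr0.
rewrite /mpow /= -/(mpow _ _) IH mulmx_diag; congr diag_mx.
by apply/rowP => j; rewrite !mxE exprS.
Qed.

Lemma pev_diag n (d : 'rV[C]_n) p :
  pev (diag_mx d) p = diag_mx (\row_j p.[d 0 j]).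
Proof.
apply/matrixP => i j; rewrite /pev summxE.
under eq_bigr => k _ do rewrite mpow_diag !mxE -mulr_natr mulrA.
rewrite !mxE horner_coef -[RHS]mulr_natr mulr_suml; by apply: eq_bigr => k _.
Qed.

Lemma pev_conj n (U D : 'M[C]_n) p :
  U *m adjmx U = 1%:M -> adjmx U *m U = 1%:M ->
  pev (U *m D *m adjmx U) p = U *m pev D p *m adjmx U.
Proof.
move=> h1 h2; rewrite /pev mulmx_sumr mulmx_suml; apply: eq_bigr => k _.
by rewrite mpow_conj // -scalemxAr -scalemxAl.
Qed.

Lemma pev_spec n (M : 'M[C]_n) U d p (f : R -> R) :
  psd_spectral M (U, d) ->
  (forall j, p.[Complex (d 0 j) 0] = Complex (f (d 0 j)) 0) ->
  pev M p = U *m diag_mx (map_mx (fun x : R => Complex (f x) 0) d) *m adjmx U.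
Proof.
move=> [[h1 h2] [_ /= eM]] hp; rewrite eM pev_conj // pev_diag.
by congr (_ *m diag_mx _ *m _); apply/rowP => j; rewrite !mxE hp.
Qed.

Lemma mxpowR_spec n (M : 'M[C]_n) alpha : (exists Ud, psd_spectral M Ud) ->
  exists Ud, psd_spectral M Ud /\ mxpowR M alpha =
   Ud.1 *m diag_mx (map_mx (fun x : R => Complex (powR x alpha) 0) Ud.2) *m adjmx Ud.1.
Proof.
by rewrite /mxpowR; case: pselect => // h _; exists (projT1 (cid h)); split => //;
  case: (cid h).
Qed.

Lemma mpowS n (K : 'M[C]_n) k : mpow K k.+1 = K *m mpow K k.
Proof. by []. Qed.

Lemma mpow_comm n (K K' : 'M[C]_n) k :
  K *m K' = K' *m K -> K *m mpow K' k = mpow K' k *m K.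
Proof.
move=> hc; elim: k => [|j IH]; first by rewrite /= mulmx1 mul1mx.
by rewrite mpowS mulmxA hc -!mulmxA IH.
Qed.

Lemma mpow_mulv n (K K' : 'M[C]_n) (v : 'cV_n) k :
  K *m v = K' *m v -> K *m K' = K' *m K -> mpow K k *m v = mpow K' k *m v.
Proof.
move=> hv hc; elim: k => [|k IH] //.
rewrite !mpowS -!mulmxA IH mulmxA mpow_comm // -mulmxA hv mulmxA.
by rewrite mulmxA (@mpow_comm _ K' K').
Qed.

Lemma pev_mulv n (K K' : 'M[C]_n) (v : 'cV_n) p :
  K *m v = K' *m v -> K *m K' = K' *m K -> pev K p *m v = pev K' p *m v.
Proof.
move=> hv hc; rewrite /pev !mulmx_suml; apply: eq_bigr => k _.
by rewrite -!scalemxAl (mpow_mulv _ hv hc).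
Qed.

Lemma pev_morph m n (L : 'M[C]_m -> 'M[C]_n) (M : 'M[C]_m) p :
  L 1%:M = 1%:M -> (forall A B, L (A *m B) = L A *m L B) ->
  (forall (a : C) A B, L (a *: A + B) = a *: L A + L B) -> L 0 = 0 ->
  pev (L M) p = L (pev M p).
Proof.
move=> h1 hM hL h0.
have mp : forall k, mpow (L M) k = L (mpow M k).
  by elim=> [|k IH]; rewrite ?h1 // !mpowS IH hM.
rewrite /pev; elim/big_rec2: _ => [|k x y _ ->]; first by rewrite h0.
by rewrite hL mp.
Qed.

Lemma adjmx_spec n (U : 'M[C]_n) (d : 'rV[R]_n) (f : R -> R) :
  adjmx (U *m diag_mx (map_mx (fun x : R => Complex (f x) 0) d) *m adjmx U) =
  U *m diag_mx (map_mx (fun x : R => Complex (f x) 0) d) *m adjmx U.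
Proof.
rewrite !adjmx_mul adjmxK mulmxA; congr (_ *m _ *m _).
apply/matrixP => i j; rewrite !mxE.
case: (eqVneq i j) => [->|nij]; first by rewrite mulr1n; apply/eqP; rewrite eq_complex /= oppr0 !eqxx. by rewrite !mulr0n conjC0.
Qed.

End P2.

Section P3.
Variable R : realType.
Local Notation C := R[i].

Lemma sum_delta (Y : finType) (a : Y) (F : Y -> C) :
  \sum_y (a == y)%:R * F y = F a.
Proof.
rewrite (bigD1 a) //= eqxx mul1r big1 ?addr0 // => y /negPf.
by rewrite eq_sym => ->; rewrite mul0r.
Qed.

Lemma sum_delta' (Y : finType) (a : Y) (F : Y -> C) :
  \sum_y F y * (y == a)%:R = F a.
Proof.
by rewrite -[RHS](sum_delta a); apply: eq_bigr => y _; rewrite mulrC eq_sym.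
Qed.

Section Kern.
Variable T : finType.

Lemma sum_enum (F : T -> C) : \sum_(k < #|T|) F (enum_val k) = \sum_t F t.
Proof. by rewrite (big_enum_val F). Qed.

Lemma sum_enum_rank (F : 'I_#|T| -> C) : \sum_(k < #|T|) F k = \sum_t F (enum_rank t).
Proof.
by rewrite -sum_enum; apply: eq_bigr => k _; rewrite enum_valK.
Qed.

Definition kcomp (f g : T -> T -> C) := fun i j => \sum_k f i k * g k j.
Definition kapp (f : T -> T -> C) (v : T -> C) := fun i => \sum_k f i k * v k.

Lemma opmx_mul f g : opmx f *m opmx g = opmx (kcomp f g).
Proof.
apply/matrixP => i j; rewrite !mxE /kcomp /kapp -sum_enum; apply: eq_bigr => k _.
by rewrite !mxE.
Qed.

Lemma opmx_vec f v : opmx f *m vecmx v = vecmx (kapp f v).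
Proof.
apply/matrixP => i j; rewrite !mxE /kcomp /kapp -sum_enum; apply: eq_bigr => k _.
by rewrite !mxE.
Qed.

Lemma inner_vec (u v : T -> C) : (adjmx (vecmx u) *m vecmx v) 0 0 = \sum_t Num.conj (u t) * v t.
Proof.
rewrite !mxE -sum_enum; apply: eq_bigr => k _.
by rewrite !mxE.
Qed.

Lemma opmx_eq (f g : T -> T -> C) : (forall i j, f i j = g i j) -> opmx f = opmx g.
Proof. by move=> h; apply/matrixP => i j; rewrite !mxE h. Qed.

Lemma vecmx_eq (u v : T -> C) : (forall i, u i = v i) -> vecmx u = vecmx v.
Proof. by move=> h; apply/matrixP => i j; rewrite !mxE h. Qed.

Lemma opmx_gram (T' : finType) (g : T -> T' -> C) :
  exists Ud, psd_spectral (opmx (fun i j => \sum_t g i t * Num.conj (g j t))) Ud.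
Proof.
apply: spectral_exists.
  apply/matrixP => i j; rewrite !mxE rmorph_sum; apply: eq_bigr => t _.
  by rewrite rmorphM /= conjCK mulrC.
move=> u.
have -> : (adjmx u *m opmx (fun i j => \sum_t g i t * Num.conj (g j t)) *m u) 0 0 =
  \sum_t (\sum_i Num.conj (u i 0) * g (enum_val i) t) *
          Num.conj (\sum_i Num.conj (u i 0) * g (enum_val i) t).
  rewrite mxE.
  under eq_bigr => j _ do rewrite mxE mulr_suml.
  rewrite exchange_big /=.
  under [RHS]eq_bigr => t _ do rewrite rmorph_sum mulr_suml.
  rewrite [RHS]exchange_big /=; apply: eq_bigr => i _.
  under [RHS]eq_bigr => t _ do rewrite mulr_sumr.
  rewrite [RHS]exchange_big /=; apply: eq_bigr => j _.
  rewrite !mxE mulr_sumr mulr_suml; apply: eq_bigr => t _.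
  by rewrite rmorphM /= conjCK; ring.
by apply: sumr_ge0 => t _; rewrite mul_conjC_ge0.
Qed.

End Kern.

Section Site.
Variables (T X Y : finType) (pr : T -> X) (rs : T -> Y) (mk : X -> Y -> T).
Hypotheses (h1 : forall x y, pr (mk x y) = x) (h2 : forall x y, rs (mk x y) = y)
  (h3 : forall t, mk (pr t) (rs t) = t).

Lemma sum_site (F : T -> C) : \sum_t F t = \sum_x \sum_y F (mk x y).
Proof.
rewrite pair_bigA /= (reindex (fun p : X * Y => mk p.1 p.2)) //.
exists (fun t => (pr t, rs t)) => [[x y] _|t _] /=; first by rewrite h1 h2.
by rewrite h3.
Qed.

Definition Lk (f : X -> X -> C) : T -> T -> C :=
  fun i j => f (pr i) (pr j) * (rs i == rs j)%:R.
Definition kM (M : 'M[C]_#|X|) := fun x x' => M (enum_rank x) (enum_rank x').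
Definition Lmx M := opmx (Lk (kM M)).

Lemma kapp_L f v i : kapp (Lk f) v i = \sum_x f (pr i) x * v (mk x (rs i)).
Proof.
rewrite /kapp sum_site; apply: eq_bigr => x _.
under eq_bigr => y _ do rewrite /Lk h1 h2.
rewrite (eq_bigr (fun y => (rs i == y)%:R * (f (pr i) x * v (mk x y)))).
  by rewrite sum_delta.
by move=> y _; rewrite mulrAC mulrC mulrA.
Qed.

Lemma Lmx_mul A B : Lmx (A *m B) = Lmx A *m Lmx B.
Proof.
rewrite /Lmx opmx_mul; apply: opmx_eq => i j.
rewrite /kcomp sum_site /Lk /kM mxE sum_enum_rank mulr_suml.
apply: eq_bigr => x _.
under eq_bigr => y _ do rewrite h1 h2.
rewrite (eq_bigr (fun y => (rs i == y)%:R *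
   (A (enum_rank (pr i)) (enum_rank x) * B (enum_rank x) (enum_rank (pr j)) *
     (rs i == rs j)%:R))).
  by rewrite sum_delta.
move=> y _; case: (eqVneq (rs i) y) => [->|]; first by ring.
by move=> _; rewrite /= !mulr0n; ring.
Qed.

Lemma Lmx1 : Lmx 1%:M = 1%:M.
Proof.
apply/matrixP => i j; rewrite !mxE /Lk /kM !mxE !(inj_eq enum_rank_inj).
case: (eqVneq i j) => [->|ne]; first by rewrite !eqxx mulr1.
case: (eqVneq (pr (enum_val i)) (pr (enum_val j))) => e1; last by rewrite mul0r.
case: (eqVneq (rs (enum_val i)) (rs (enum_val j))) => e2; last by rewrite mulr0.
by case/eqP: ne; apply: enum_val_inj; rewrite -(h3 (enum_val i)) e1 e2 h3.
Qed.

Lemma Lmx_lin (a : C) A B : Lmx (a *: A + B) = a *: Lmx A + Lmx B.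
Proof. by apply/matrixP => i j; rewrite !mxE /Lk /kM !mxE; ring. Qed.

Lemma Lmx0 : Lmx 0 = 0.
Proof. by apply/matrixP => i j; rewrite !mxE /Lk /kM !mxE mul0r. Qed.

Lemma pev_L M p : pev (Lmx M) p = Lmx (pev M p).
Proof. apply: pev_morph; [exact: Lmx1|exact: Lmx_mul|exact: Lmx_lin|exact: Lmx0]. Qed.

End Site.
End P3.

Section P4.
Variable R : realType.
Local Notation C := R[i].

Definition spmx n (U : 'M[C]_n) (d : 'rV[R]_n) (f : R -> R) :=
  U *m diag_mx (map_mx (fun x : R => Complex (f x) 0) d) *m adjmx U.

Lemma spmx_entry n (U : 'M[C]_n) d f i j :
  spmx U d f i j = \sum_k U i k * Complex (f (d 0 k)) 0 * Num.conj (U j k).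
Proof.
rewrite /spmx mxE; apply: eq_bigr => k _.
by rewrite mul_mx_diag !mxE.
Qed.

Lemma power_step (T X Y : finType) (pr : T -> X) (rs : T -> Y) (mk : X -> Y -> T)
  (h1 : forall x y, pr (mk x y) = x) (h2 : forall x y, rs (mk x y) = y)
  (h3 : forall t, mk (pr t) (rs t) = t)
  (M : 'M[C]_#|T|) (rho : 'M[C]_#|X|) (U : 'M[C]_#|X|) mu (v : 'cV[C]_#|T|) alpha :
  (exists Ud, psd_spectral M Ud) -> psd_spectral rho (U, mu) ->
  M *m v = Lmx pr rs rho *m v -> M *m Lmx pr rs rho = Lmx pr rs rho *m M ->
  adjmx (mxpowR M alpha) = mxpowR M alpha /\
  mxpowR M alpha *m v = Lmx pr rs (spmx U mu (fun x => powR x alpha)) *m v.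
Proof.
move=> hM hr hv hc.
have [[U1 d1] [s1 e1]] := mxpowR_spec alpha hM.
split; first by rewrite e1 adjmx_spec.
have [p hp] := interp (fun z : C => Complex (powR (complex.Re z) alpha) 0)
  ([seq Complex (d1 0 j) 0 | j <- enum 'I_#|T|] ++
   [seq Complex (mu 0 j) 0 | j <- enum 'I_#|X|]).
have -> : mxpowR M alpha = pev M p.
  rewrite e1 /= (pev_spec (f := fun x => powR x alpha) s1) // => j.
  by rewrite hp // mem_cat map_f ?mem_enum.
rewrite (pev_mulv _ hv hc) (pev_L h1 h2 h3); congr (Lmx _ _ _ *m _).
rewrite (pev_spec (f := fun x => powR x alpha) hr) // => j.
by rewrite hp // mem_cat orbC map_f ?mem_enum.
Qed.

End P4.

Section P5.
Variable R : realType.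
Local Notation C := R[i].

Lemma sum_swap (A B : finType) (F : A -> B -> C) :
  \sum_a \sum_b F a b = \sum_b \sum_a F a b.
Proof. exact: exchange_big. Qed.

Lemma sum3_rot (A B D : finType) (F : A -> B -> D -> R[i]) :
  \sum_a \sum_b \sum_d F a b d = \sum_d \sum_a \sum_b F a b d.
Proof.
under eq_bigr => a _ do rewrite sum_swap.
by rewrite sum_swap.
Qed.
Lemma perm5 (A B D E G : finType) (F : A -> B -> D -> E -> G -> R[i]) :
  \sum_a \sum_b \sum_d \sum_e \sum_g F a b d e g =
  \sum_e \sum_g \sum_d \sum_a \sum_b F a b d e g.
Proof.
under eq_bigr => a _ do under eq_bigr => b _ do rewrite sum_swap.
under eq_bigr => a _ do rewrite sum_swap.
rewrite sum_swap; apply: eq_bigr => e _.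

under eq_bigr => a _ do under eq_bigr => b _ do rewrite sum_swap.
under eq_bigr => a _ do rewrite sum_swap.
rewrite sum_swap; apply: eq_bigr => g _.
under eq_bigr => a _ do rewrite sum_swap.
by rewrite sum_swap.
Qed.

Lemma quad_entry n (A M : 'M[C]_n) k :
  (adjmx A *m M *m A) k k = \sum_i \sum_j Num.conj (A i k) * M i j * A j k.
Proof.
rewrite mxE; under eq_bigr => j _ do rewrite mxE mulr_suml.
rewrite exchange_big /=; apply: eq_bigr => i _; apply: eq_bigr => j _.
by rewrite !mxE.
Qed.

Lemma sum4_swap (A B D E : finType) (F : A -> B -> D -> E -> R[i]) :
  \sum_a \sum_b \sum_d \sum_e F a b d e = \sum_d \sum_e \sum_a \sum_b F a b d e.
Proof.
under eq_bigr => a _ do rewrite sum_swap.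
rewrite sum_swap; apply: eq_bigr => d _.
under eq_bigr => a _ do rewrite sum_swap.
by rewrite sum_swap.
Qed.

Lemma cplx_gt0 (r : R) : (0 < Complex r 0) = (0 < r).
Proof. by rewrite ltcE /= eqxx. Qed.
Lemma cplx_ge0 (r : R) : (0 <= Complex r 0) = (0 <= r).
Proof. by rewrite lecE /= eqxx. Qed.
Lemma cplx_conj (r : R) : Num.conj (Complex r 0) = Complex r 0.
Proof. by apply/eqP; rewrite eq_complex /= oppr0 !eqxx. Qed.

Section Final.
Variables (X Y Z : finType) (Phi : X -> Y -> Z -> C).
Hypothesis unitPhi : \sum_x \sum_y \sum_z Phi x y z * Num.conj (Phi x y z) = 1.

Definition rhoX := opmx (fun x x' : X => \sum_y \sum_z Phi x y z * Num.conj (Phi x' y z)).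
Definition rhoY := opmx (fun y y' : Y => \sum_x \sum_z Phi x y z * Num.conj (Phi x y' z)).

Variables (U : 'M[C]_#|X|) (mu : 'rV[R]_#|X|) (V : 'M[C]_#|Y|) (nu : 'rV[R]_#|Y|).
Hypotheses (sX : psd_spectral rhoX (U, mu)) (sY : psd_spectral rhoY (V, nu)).
Variables (alpha beta : R).
Hypotheses (ha : 0 < alpha) (hb : 0 < beta).

Local Notation u x k := (U (enum_rank x) k).
Local Notation w y l := (V (enum_rank y) l).
Local Notation f k := (Complex (powR (mu 0 k) alpha) 0).
Local Notation g l := (Complex (powR (nu 0 l) beta) 0).

Definition aa k y z := \sum_x Num.conj (u x k) * Phi x y z.
Definition bb l x z := \sum_y Num.conj (w y l) * Phi x y z.
Definition cc k l z := \sum_x Num.conj (u x k) * bb l x z.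

Lemma cc_alt k l z : cc k l z = \sum_y Num.conj (w y l) * aa k y z.
Proof.
rewrite /cc /aa /bb.
under eq_bigr => x _ do rewrite mulr_sumr.
under [RHS]eq_bigr => y _ do rewrite mulr_sumr.
rewrite exchange_big /=; apply: eq_bigr => y _; apply: eq_bigr => x _; ring.
Qed.

Lemma stepA x y z :
  \sum_x' kM (spmx U mu (fun r => powR r alpha)) x x' * Phi x' y z =
  \sum_k u x k * f k * aa k y z.
Proof.
rewrite /kM /aa.
under eq_bigr => x' _ do rewrite spmx_entry mulr_suml.
rewrite exchange_big /=; apply: eq_bigr => k _.
rewrite mulr_sumr; apply: eq_bigr => x' _; ring.
Qed.

Lemma stepB x y z :
  \sum_y' kM (spmx V nu (fun r => powR r beta)) y y' * Phi x y' z =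
  \sum_l w y l * g l * bb l x z.
Proof.
rewrite /kM /bb.
under eq_bigr => y' _ do rewrite spmx_entry mulr_suml.
rewrite exchange_big /=; apply: eq_bigr => l _.
rewrite mulr_sumr; apply: eq_bigr => y' _; ring.
Qed.

Definition Efin := \sum_x \sum_y \sum_z
  Num.conj (\sum_x' kM (spmx U mu (fun r => powR r alpha)) x x' * Phi x' y z) *
  (\sum_y' kM (spmx V nu (fun r => powR r beta)) y y' * Phi x y' z).

Lemma cc_sq k l z : cc k l z * Num.conj (cc k l z) =
  \sum_x \sum_y (Num.conj (u x k) * bb l x z) * (w y l * Num.conj (aa k y z)).
Proof.
rewrite {2}cc_alt /cc rmorph_sum mulr_suml; apply: eq_bigr => x _.
rewrite mulr_sumr; apply: eq_bigr => y _.
by rewrite rmorphM /= conjCK.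
Qed.

Lemma Efin_eq : Efin = \sum_k \sum_l \sum_z (f k * g l) * (cc k l z * Num.conj (cc k l z)).
Proof.
rewrite /Efin.
under eq_bigr => x _ do under eq_bigr => y _ do under eq_bigr => z _ do
  (rewrite stepA stepB rmorph_sum mulr_suml; under eq_bigr => k _ do rewrite mulr_sumr).
rewrite perm5; apply: eq_bigr => k _; apply: eq_bigr => l _; apply: eq_bigr => z _.
rewrite cc_sq mulr_sumr; apply: eq_bigr => x _.
rewrite mulr_sumr; apply: eq_bigr => y _.
rewrite !rmorphM /= cplx_conj; ring.
Qed.

Lemma mu_aa k : Complex (mu 0 k) 0 = \sum_y \sum_z aa k y z * Num.conj (aa k y z).
Proof.
case: sX => [[h1 h2] [_ /= eM]].
have : (adjmx U *m rhoX *m U) k k = Complex (mu 0 k) 0.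
  rewrite eM !mulmxA h2 mul1mx -mulmxA h2 mulmx1 mxE eqxx mulr1n mxE //.
move=> <-; rewrite quad_entry.
under [LHS]eq_bigr => i _ do rewrite sum_enum_rank.
rewrite [LHS]sum_enum_rank.
under [LHS]eq_bigr => x _ do under eq_bigr => x' _ do
  rewrite mxE !enum_rankK mulr_sumr mulr_suml.
under [LHS]eq_bigr => x _ do under eq_bigr => x' _ do under eq_bigr => y _ do
  rewrite mulr_sumr mulr_suml.
rewrite sum4_swap; apply: eq_bigr => y _; apply: eq_bigr => z _.
rewrite /aa rmorph_sum mulr_suml; apply: eq_bigr => x _.
rewrite mulr_sumr; apply: eq_bigr => x' _.
by rewrite rmorphM /= conjCK; ring.
Qed.

Lemma nu_bb l : Complex (nu 0 l) 0 = \sum_x \sum_z bb l x z * Num.conj (bb l x z).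
Proof.
case: sY => [[h1 h2] [_ /= eM]].
have : (adjmx V *m rhoY *m V) l l = Complex (nu 0 l) 0.
  rewrite eM !mulmxA h2 mul1mx -mulmxA h2 mulmx1 mxE eqxx mulr1n mxE //.
move=> <-; rewrite quad_entry.
under [LHS]eq_bigr => i _ do rewrite sum_enum_rank.
rewrite [LHS]sum_enum_rank.
under [LHS]eq_bigr => y _ do under eq_bigr => y' _ do
  rewrite mxE !enum_rankK mulr_sumr mulr_suml.
under [LHS]eq_bigr => y _ do under eq_bigr => y' _ do under eq_bigr => x _ do
  rewrite mulr_sumr mulr_suml.
rewrite sum4_swap; apply: eq_bigr => x _; apply: eq_bigr => z _.
rewrite /bb rmorph_sum mulr_suml; apply: eq_bigr => y _.
rewrite mulr_sumr; apply: eq_bigr => y' _.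
by rewrite rmorphM /= conjCK; ring.
Qed.

Lemma sq0 (A B : finType) (F : A -> B -> C) :
  \sum_a \sum_b F a b * Num.conj (F a b) = 0 -> forall a b, F a b = 0.
Proof.
move=> h a b.
have h1 := @psumr_eq0P _ _ predT _ (fun a _ => sumr_ge0 _ (fun b _ => mul_conjC_ge0 (F a b))) h a isT.
have := @psumr_eq0P _ _ predT _ (fun b _ => mul_conjC_ge0 (F a b)) h1 b isT.
by move/eqP; rewrite mul_conjC_eq0 => /eqP.
Qed.

Lemma cc0_mu k l z : mu 0 k = 0 -> cc k l z = 0.
Proof.
move=> h0; have := mu_aa k; rewrite h0 => /esym h.
have ha0 := sq0 h.
rewrite cc_alt big1 // => y _; rewrite ha0 ?mulr0 //.
Qed.

Lemma cc0_nu k l z : nu 0 l = 0 -> cc k l z = 0.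
Proof.
move=> h0; have := nu_bb l; rewrite h0 => /esym h.
have hb0 := sq0 h.
rewrite /cc big1 // => x _; rewrite hb0 ?mulr0 //.
Qed.

Lemma unit_rows n (W : 'M[C]_n) (T : finType) (e : T -> 'I_n) (x x' : T) :
  W *m adjmx W = 1%:M -> injective e ->
  \sum_k W (e x) k * Num.conj (W (e x') k) = (x == x')%:R.
Proof.
move=> hW ie; have := congr1 (fun M : 'M[C]_n => M (e x) (e x')) hW.
rewrite /= !mxE (inj_eq ie) => <-; apply: eq_bigr => k _; by rewrite !mxE.
Qed.

Lemma Phi_inv x y z : Phi x y z = \sum_k \sum_l u x k * w y l * cc k l z.
Proof.
case: sX => [[hU _] _]; case: sY => [[hV _] _].
symmetry; rewrite /cc /bb.
under eq_bigr => k _ do under eq_bigr => l _ do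
  (rewrite mulr_sumr; under eq_bigr => x' _ do rewrite mulr_sumr mulr_sumr).
rewrite sum4_swap.
transitivity (\sum_x' (x == x')%:R * \sum_y' ((y == y')%:R * Phi x' y' z)).
  apply: eq_bigr => x' _; rewrite mulr_sumr; apply: eq_bigr => y' _.
  rewrite -(unit_rows x x' hU enum_rank_inj) -(unit_rows y y' hV enum_rank_inj).
  rewrite mulr_suml; apply: eq_bigr => k _.
  rewrite mulr_suml mulr_sumr; apply: eq_bigr => l _; ring.
by rewrite sum_delta sum_delta.
Qed.

Lemma cc_nz : exists k l z, cc k l z != 0.
Proof.
case: (pselect (exists k l z, cc k l z != 0)) => [h|hn]; first exact: h.
have h0 : forall k l z, cc k l z = 0.
  move=> k l z; apply/eqP; apply: contra_notT hn => hc; by exists k, l, z.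
have : (1 : C) = 0.
  rewrite -unitPhi; apply: big1 => x _; apply: big1 => y _; apply: big1 => z _.
  rewrite Phi_inv big1 ?mul0r // => k _; apply: big1 => l _.
  by rewrite h0 mulr0.
by move/eqP; rewrite oner_eq0.
Qed.

Lemma sum_pos (I : finType) (F : I -> C) i0 :
  (forall i, 0 <= F i) -> 0 < F i0 -> 0 < \sum_i F i.
Proof.
move=> hge hgt; rewrite (bigD1 i0) //=.
by apply: ltr_wpDr => //; apply: sumr_ge0 => i _.
Qed.

Lemma Efin_gt0 : 0 < Efin.
Proof.
have fge : forall k, 0 <= f k by move=> k; rewrite cplx_ge0 powR_ge0.
have gge : forall l, 0 <= g l by move=> l; rewrite cplx_ge0 powR_ge0.
have tge : forall k l z, 0 <= (f k * g l) * (cc k l z * Num.conj (cc k l z)).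
  by move=> k l z; apply: mulr_ge0; [apply: mulr_ge0|exact: mul_conjC_ge0].
have [k0 [l0 [z0 hc]]] := cc_nz.
rewrite Efin_eq; apply: (sum_pos (i0 := k0)).
  by move=> k; apply: sumr_ge0 => l _; apply: sumr_ge0 => z _.
apply: (sum_pos (i0 := l0)).
  by move=> l; apply: sumr_ge0 => z _.
apply: (sum_pos (i0 := z0)) => // .
have mu0 : 0 < mu 0 k0.
  case: sX => _ [hm _]; rewrite lt_def hm andbT.
  by apply: contraNneq hc => h; rewrite (cc0_mu l0 z0 h).
have nu0 : 0 < nu 0 l0.
  case: sY => _ [hm _]; rewrite lt_def hm andbT.
  by apply: contraNneq hc => h; rewrite (cc0_nu k0 z0 h).
apply: mulr_gt0; last by rewrite mul_conjC_gt0.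
by apply: mulr_gt0; rewrite cplx_gt0 powR_gt0.
Qed.

End Final.
End P5.

Section P6.
Variable R : realType.
Local Notation C := R[i].

Lemma conj_nat (n : nat) : Num.conj (n%:R : C) = n%:R.
Proof. by rewrite rmorph_nat. Qed.

Lemma rhoAB_spec a b c d (Psi : idx a b c d -> C) :
  exists Ud, psd_spectral (rhoAB Psi) Ud.
Proof.
pose g (i : idx a b c d) (t : ('I_c * 'I_d) * ('I_c * 'I_d)) :=
  let: (x, y, z, w) := i in ((z, w) == t.1)%:R * Psi (x, y, t.2.1, t.2.2).
have [Ud hU] := opmx_gram g; exists Ud; move: hU.
suff -> : rhoAB Psi = opmx (fun i j => \sum_t g i t * Num.conj (g j t)) by [].
apply: opmx_eq => [[[[x y] z] w] [[[x' y'] z'] w']] /=.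
rewrite /g -(pair_bigA _ (fun q (r : 'I_c * 'I_d) => ((z,w)==q)%:R * Psi (x,y,r.1,r.2) *
   Num.conj (((z',w')==q)%:R * Psi (x',y',r.1,r.2)))) /=.
symmetry.
transitivity (\sum_q ((z,w)==q)%:R * (((z',w')==q)%:R *
   \sum_(r : 'I_c * 'I_d) Psi (x,y,r.1,r.2) * Num.conj (Psi (x',y',r.1,r.2)))).
  apply: eq_bigr => q _; rewrite !mulr_sumr; apply: eq_bigr => r _.
  by rewrite rmorphM /= conj_nat; ring.
rewrite sum_delta xpair_eqE [z' == z]eq_sym [w' == w]eq_sym.
by rewrite -(pair_bigA _ (fun z0 w0 => Psi (x,y,z0,w0) * Num.conj (Psi (x',y',z0,w0)))).
Qed.


Lemma rhoBC_spec a b c d (Psi : idx a b c d -> C) :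
  exists Ud, psd_spectral (rhoBC Psi) Ud.
Proof.
pose g (i : idx a b c d) (t : ('I_a * 'I_d) * ('I_a * 'I_d)) :=
  let: (x, y, z, w) := i in ((x, w) == t.1)%:R * Psi (t.2.1, y, z, t.2.2).
have [Ud hU] := opmx_gram g; exists Ud; move: hU.
suff -> : rhoBC Psi = opmx (fun i j => \sum_t g i t * Num.conj (g j t)) by [].
apply: opmx_eq => [[[[x y] z] w] [[[x' y'] z'] w']] /=.
rewrite /g -(pair_bigA _ (fun q (r : 'I_a * 'I_d) => ((x,w)==q)%:R * Psi (r.1,y,z,r.2) *
   Num.conj (((x',w')==q)%:R * Psi (r.1,y',z',r.2)))) /=.
symmetry.
transitivity (\sum_q ((x,w)==q)%:R * (((x',w')==q)%:R *
   \sum_(r : 'I_a * 'I_d) Psi (r.1,y,z,r.2) * Num.conj (Psi (r.1,y',z',r.2)))).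
  apply: eq_bigr => q _; rewrite !mulr_sumr; apply: eq_bigr => r _.
  by rewrite rmorphM /= conj_nat; ring.
rewrite sum_delta xpair_eqE [x' == x]eq_sym [w' == w]eq_sym.
by rewrite -(pair_bigA _ (fun x0 w0 => Psi (x0,y,z,w0) * Num.conj (Psi (x0,y',z',w0)))).
Qed.


End P6.

Section Combine.
Variable R : realType.
Local Notation C := R[i].
Variables (a b c d : nat) (Psi : idx a b c d -> C).
Local Notation T := (idx a b c d).
Variables (X Y Z Ys Yt : finType).
Variables (prs : T -> X) (rss : T -> Ys) (mks : X -> Ys -> T).
Hypotheses (hs1 : forall x y, prs (mks x y) = x) (hs2 : forall x y, rss (mks x y) = y)
  (hs3 : forall t, mks (prs t) (rss t) = t).
Variables (prt : T -> Y) (rst : T -> Yt) (mkt : Y -> Yt -> T).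
Hypotheses (ht1 : forall x y, prt (mkt x y) = x) (ht2 : forall x y, rst (mkt x y) = y)
  (ht3 : forall t, mkt (prt t) (rst t) = t).
Variables (Phi : X -> Y -> Z -> C) (e : X -> Y -> Z -> T) (e' : T -> X * Y * Z).
Hypotheses (he1 : forall x y z, e' (e x y z) = (x, y, z))
  (he2 : forall t, e (e' t).1.1 (e' t).1.2 (e' t).2 = t).
Hypothesis hPhi : forall x y z, Phi x y z = Psi (e x y z).
Hypotheses (es1 : forall x y z, prs (e x y z) = x)
  (es2 : forall x x' y z, mks x' (rss (e x y z)) = e x' y z)
  (et1 : forall x y z, prt (e x y z) = y)
  (et2 : forall x y y' z, mkt y' (rst (e x y z)) = e x y' z).
Hypothesis unitPsi : \sum_t Psi t * Num.conj (Psi t) = 1.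
Hypotheses
  (actAB : rhoAB Psi *m vecmx Psi = Lmx prs rss (rhoX Phi) *m vecmx Psi)
  (commAB : rhoAB Psi *m Lmx prs rss (rhoX Phi) = Lmx prs rss (rhoX Phi) *m rhoAB Psi)
  (actBC : rhoBC Psi *m vecmx Psi = Lmx prt rst (rhoY Phi) *m vecmx Psi)
  (commBC : rhoBC Psi *m Lmx prt rst (rhoY Phi) = Lmx prt rst (rhoY Phi) *m rhoBC Psi).

Lemma sum_e (F : T -> C) : \sum_t F t = \sum_x \sum_y \sum_z F (e x y z).
Proof.
rewrite pair_bigA /= pair_bigA /=.
rewrite (reindex (fun p : X * Y * Z => e p.1.1 p.1.2 p.2)) //=.
exists e' => [[[x y] z] _|t _] /=; first by rewrite he1.
by rewrite he2.
Qed.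

Theorem combine alpha beta : 0 < alpha -> 0 < beta ->
  0 < expect Psi (mxpowR (rhoAB Psi) alpha *m mxpowR (rhoBC Psi) beta).
Proof.
move=> ha hb.
have [[U mu] sX] : exists Ud, psd_spectral (rhoX Phi) Ud.
  have [Ud hU] := opmx_gram (fun x (p : Y * Z) => Phi x p.1 p.2).
  exists Ud; move: hU; congr (psd_spectral _ _); apply: opmx_eq => x x'.
  by rewrite pair_bigA.
have [[V nu] sY] : exists Ud, psd_spectral (rhoY Phi) Ud.
  have [Ud hU] := opmx_gram (fun y (p : X * Z) => Phi p.1 y p.2).
  exists Ud; move: hU; congr (psd_spectral _ _); apply: opmx_eq => y y'.
  by rewrite pair_bigA.
have [hX Xv] := power_step hs1 hs2 hs3 alpha (rhoAB_spec Psi) sX actAB commAB.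
have [hY Yv] := power_step ht1 ht2 ht3 beta (rhoBC_spec Psi) sY actBC commBC.
have unitPhi : \sum_x \sum_y \sum_z Phi x y z * Num.conj (Phi x y z) = 1.
  rewrite -unitPsi sum_e; apply: eq_bigr => x _; apply: eq_bigr => y _.
  by apply: eq_bigr => z _; rewrite hPhi.
rewrite /expect.
set Xm := mxpowR _ alpha; set Ym := mxpowR _ beta.
have -> : adjmx (vecmx Psi) *m (Xm *m Ym) *m vecmx Psi =
          adjmx (Xm *m vecmx Psi) *m (Ym *m vecmx Psi) by rewrite adjmx_mul hX !mulmxA.
rewrite Xv Yv /Lmx !opmx_vec inner_vec.
under eq_bigr => t _ do rewrite (kapp_L hs1 hs2 hs3) (kapp_L ht1 ht2 ht3).
rewrite sum_e.
suff -> : \sum_x \sum_y \sum_z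
   Num.conj (\sum_x' kM (spmx U mu (fun x0 : R => powR x0 alpha)) (prs (e x y z)) x' *
     Psi (mks x' (rss (e x y z)))) *
   (\sum_y' kM (spmx V nu (fun x0 : R => powR x0 beta)) (prt (e x y z)) y' *
     Psi (mkt y' (rst (e x y z)))) = Efin Phi U mu V nu alpha beta.
  exact: Efin_gt0.
rewrite /Efin; apply: eq_bigr => x _; apply: eq_bigr => y _; apply: eq_bigr => z _.
rewrite es1 et1; congr (Num.conj _ * _).
  by apply: eq_bigr => x' _; rewrite es2 hPhi.
by apply: eq_bigr => y' _; rewrite et2 hPhi.
Qed.

End Combine.

Section Helpers.
Variable R : realType.
Local Notation C := R[i].

Lemma sum_pair (A B : finType) (F : A * B -> C) : \sum_t F t = \sum_a \sum_b F (a, b).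
Proof. by rewrite pair_bigA; apply: eq_bigr => [[]]. Qed.

Lemma sum4 a b c d (F : idx a b c d -> C) :
  \sum_t F t = \sum_x \sum_y \sum_z \sum_w F (x, y, z, w).
Proof.
rewrite sum_pair sum_pair.
rewrite (sum_pair (fun p => \sum_z \sum_w F (p, z, w))).
by [].
Qed.

Lemma nat_and (p q : bool) : ((p && q)%:R : C) = p%:R * q%:R.
Proof. by case: p; case: q; rewrite ?mulr1 ?mul1r ?mulr0 ?mul0r. Qed.

Lemma unit_sum (T : finType) (v : T -> C) : unit_vec v -> \sum_t v t * Num.conj (v t) = 1.
Proof. by rewrite /unit_vec => <-; apply: eq_bigr => t _; rewrite normCK. Qed.

Lemma sum_unit (T : finType) (phi : T -> C) (F : T -> C) K :
  \sum_t phi t * Num.conj (phi t) = 1 ->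
  (forall t, F t = K * (phi t * Num.conj (phi t))) -> \sum_t F t = K.
Proof. by move=> hN hF; rewrite (eq_bigr _ (fun t _ => hF t)) -mulr_sumr hN mulr1. Qed.

Lemma comm_L (T X Y : finType) (pr : T -> X) (rs : T -> Y) (mk : X -> Y -> T)
  (h1 : forall x y, pr (mk x y) = x) (h2 : forall x y, rs (mk x y) = y)
  (h3 : forall t, mk (pr t) (rs t) = t)
  (F f : X -> X -> C) (K' : Y -> Y -> C) (K : T -> T -> C) :
  (forall i j, K i j = F (pr i) (pr j) * K' (rs i) (rs j)) ->
  (forall u v, \sum_x F u x * f x v = \sum_x f u x * F x v) ->
  opmx K *m opmx (Lk pr rs f) = opmx (Lk pr rs f) *m opmx K.
Proof.
move=> hK hc; rewrite !opmx_mul; apply: opmx_eq => i j.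
rewrite /kcomp !(sum_site h1 h2 h3).
transitivity (\sum_x F (pr i) x * f x (pr j) * K' (rs i) (rs j)).
  apply: eq_bigr => x _; rewrite /Lk.
  under eq_bigr => y _ do rewrite hK h1 h2.
  rewrite (eq_bigr (fun y => (rs j == y)%:R * (F (pr i) x * f x (pr j) * K' (rs i) y))).
    by rewrite sum_delta.
  by move=> y _; rewrite [rs j == y]eq_sym; ring.
transitivity (\sum_x f (pr i) x * F x (pr j) * K' (rs i) (rs j)).
  by rewrite -!mulr_suml hc.
apply: eq_bigr => x _; rewrite /Lk.
under eq_bigr => y _ do rewrite hK h1 h2.
rewrite (eq_bigr (fun y => (rs i == y)%:R * (f (pr i) x * F x (pr j) * K' y (rs j)))).
  by rewrite sum_delta.
by move=> y _; ring.
Qed.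

Lemma act_overlap (T X Y : finType) (pr : T -> X) (rs : T -> Y) (mk : X -> Y -> T)
  (h1 : forall x y, pr (mk x y) = x) (h2 : forall x y, rs (mk x y) = y)
  (h3 : forall t, mk (pr t) (rs t) = t)
  (F : X -> X -> C) (K' : Y -> Y -> C) (K : T -> T -> C) (v : T -> C) :
  (forall i j, K i j = F (pr i) (pr j) * K' (rs i) (rs j)) ->
  (forall x r, \sum_r' K' r r' * v (mk x r') = v (mk x r)) ->
  forall i, kapp K v i = kapp (Lk pr rs F) v i.
Proof.
move=> hK hP i; rewrite (kapp_L h1 h2 h3) /kapp (sum_site h1 h2 h3).
apply: eq_bigr => x _; rewrite -hP mulr_sumr; apply: eq_bigr => r _.
by rewrite hK h1 h2 mulrA.
Qed.

Lemma Lmx_opmx (T X Y : finType) (pr : T -> X) (rs : T -> Y) (f : X -> X -> C) :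
  Lmx pr rs (opmx f) = opmx (Lk pr rs f).
Proof. by apply: opmx_eq => i j; rewrite /Lk /kM mxE !enum_rankK. Qed.

End Helpers.

Section Kernels.
Variable R : realType.
Local Notation C := R[i].
Variables (a b c d : nat).
Local Notation T := (idx a b c d).

Definition kAB (Psi : T -> C) (i j : T) : C :=
  let: (x, y, z, w) := i in let: (x', y', z', w') := j in
  ((z == z') && (w == w'))%:R *
  \sum_(z0 : 'I_c) \sum_(w0 : 'I_d) Psi (x, y, z0, w0) * Num.conj (Psi (x', y', z0, w0)).
Definition kBC (Psi : T -> C) (i j : T) : C :=
  let: (x, y, z, w) := i in let: (x', y', z', w') := j in
  ((x == x') && (w == w'))%:R *
  \sum_(x0 : 'I_a) \sum_(w0 : 'I_d) Psi (x0, y, z, w0) * Num.conj (Psi (x0, y', z', w0)).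

Lemma rhoAB_k Psi : rhoAB Psi = opmx (kAB Psi). Proof. by []. Qed.
Lemma rhoBC_k Psi : rhoBC Psi = opmx (kBC Psi). Proof. by []. Qed.

Lemma kAB_app Psi x y z w : kapp (kAB Psi) Psi (x, y, z, w) =
  \sum_x' \sum_y' \sum_z0 \sum_w0
     Psi (x, y, z0, w0) * Num.conj (Psi (x', y', z0, w0)) * Psi (x', y', z, w).
Proof.
rewrite /kapp sum4; apply: eq_bigr => x' _; apply: eq_bigr => y' _ /=.
transitivity (\sum_z' (z == z')%:R * \sum_w' (w == w')%:R *
  ((\sum_z0 \sum_w0 Psi (x, y, z0, w0) * Num.conj (Psi (x', y', z0, w0))) * Psi (x', y', z', w'))).
  apply: eq_bigr => z' _; rewrite mulr_sumr; apply: eq_bigr => w' _.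
  by rewrite nat_and; ring.
rewrite sum_delta sum_delta mulr_suml; apply: eq_bigr => z0 _.
by rewrite mulr_suml.
Qed.

Lemma kBC_app Psi x y z w : kapp (kBC Psi) Psi (x, y, z, w) =
  \sum_y' \sum_z' \sum_x0 \sum_w0
     Psi (x0, y, z, w0) * Num.conj (Psi (x0, y', z', w0)) * Psi (x, y', z', w).
Proof.
rewrite /kapp sum4 exchange_big /=; apply: eq_bigr => y' _.
rewrite exchange_big /=; apply: eq_bigr => z' _ /=.
transitivity (\sum_x' (x == x')%:R * \sum_w' (w == w')%:R *
  ((\sum_x0 \sum_w0 Psi (x0, y, z, w0) * Num.conj (Psi (x0, y', z', w0))) * Psi (x', y', z', w'))).
  apply: eq_bigr => x' _; rewrite mulr_sumr; apply: eq_bigr => w' _.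
  by rewrite nat_and; ring.
rewrite sum_delta sum_delta mulr_suml; apply: eq_bigr => x0 _.
by rewrite mulr_suml.
Qed.

Definition prA (t : T) : 'I_a := t.1.1.1.
Definition rsA (t : T) : 'I_b * 'I_c * 'I_d := (t.1.1.2, t.1.2, t.2).
Definition mkA (x : 'I_a) (r : 'I_b * 'I_c * 'I_d) : T := (x, r.1.1, r.1.2, r.2).
Definition prB (t : T) : 'I_b := t.1.1.2.
Definition rsB (t : T) : 'I_a * 'I_c * 'I_d := (t.1.1.1, t.1.2, t.2).
Definition mkB (y : 'I_b) (r : 'I_a * 'I_c * 'I_d) : T := (r.1.1, y, r.1.2, r.2).
Definition prC (t : T) : 'I_c := t.1.2.
Definition rsC (t : T) : 'I_a * 'I_b * 'I_d := (t.1.1.1, t.1.1.2, t.2).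
Definition mkC (z : 'I_c) (r : 'I_a * 'I_b * 'I_d) : T := (r.1.1, r.1.2, z, r.2).
Definition prD (t : T) : 'I_d := t.2.
Definition rsD (t : T) : 'I_a * 'I_b * 'I_c := t.1.
Definition mkD (w : 'I_d) (r : 'I_a * 'I_b * 'I_c) : T := (r, w).

Lemma hA1 x r : prA (mkA x r) = x. Proof. by []. Qed.
Lemma hA2 x r : rsA (mkA x r) = r. Proof. by case: r => [[]]. Qed.
Lemma hA3 t : mkA (prA t) (rsA t) = t. Proof. by case: t => [[[]]]. Qed.
Lemma hB1 x r : prB (mkB x r) = x. Proof. by []. Qed.
Lemma hB2 x r : rsB (mkB x r) = r. Proof. by case: r => [[]]. Qed.
Lemma hB3 t : mkB (prB t) (rsB t) = t. Proof. by case: t => [[[]]]. Qed.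
Lemma hC1 x r : prC (mkC x r) = x. Proof. by []. Qed.
Lemma hC2 x r : rsC (mkC x r) = r. Proof. by case: r => [[]]. Qed.
Lemma hC3 t : mkC (prC t) (rsC t) = t. Proof. by case: t => [[[]]]. Qed.
Lemma hD1 x r : prD (mkD x r) = x. Proof. by []. Qed.
Lemma hD2 x r : rsD (mkD x r) = r. Proof. by []. Qed.
Lemma hD3 t : mkD (prD t) (rsD t) = t. Proof. by case: t. Qed.

Lemma delta_comm (X : finType) (f : X -> X -> C) u v :
  \sum_x (u == x)%:R * f x v = \sum_x f u x * (x == v)%:R.
Proof. by rewrite sum_delta sum_delta'. Qed.

Lemma commAB_C (Psi : T -> C) (f : 'I_c -> 'I_c -> C) :
  rhoAB Psi *m opmx (Lk prC rsC f) = opmx (Lk prC rsC f) *m rhoAB Psi.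
Proof.
apply: (comm_L hC1 hC2 hC3 (F := fun u v => (u == v)%:R)
  (K' := fun r r' => (r.2 == r'.2)%:R * \sum_z0 \sum_w0
     Psi (r.1.1, r.1.2, z0, w0) * Num.conj (Psi (r'.1.1, r'.1.2, z0, w0)))).
  by move=> [[[x y] z] w] [[[x' y'] z'] w'] /=; rewrite nat_and; ring.
exact: delta_comm.
Qed.

Lemma commAB_D (Psi : T -> C) (f : 'I_d -> 'I_d -> C) :
  rhoAB Psi *m opmx (Lk prD rsD f) = opmx (Lk prD rsD f) *m rhoAB Psi.
Proof.
apply: (comm_L hD1 hD2 hD3 (F := fun u v => (u == v)%:R)
  (K' := fun r r' => (r.2 == r'.2)%:R * \sum_z0 \sum_w0
     Psi (r.1.1, r.1.2, z0, w0) * Num.conj (Psi (r'.1.1, r'.1.2, z0, w0)))).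
  by move=> [[[x y] z] w] [[[x' y'] z'] w'] /=; rewrite nat_and; ring.
exact: delta_comm.
Qed.

Lemma commBC_A (Psi : T -> C) (f : 'I_a -> 'I_a -> C) :
  rhoBC Psi *m opmx (Lk prA rsA f) = opmx (Lk prA rsA f) *m rhoBC Psi.
Proof.
apply: (comm_L hA1 hA2 hA3 (F := fun u v => (u == v)%:R)
  (K' := fun r r' => (r.2 == r'.2)%:R * \sum_x0 \sum_w0
     Psi (x0, r.1.1, r.1.2, w0) * Num.conj (Psi (x0, r'.1.1, r'.1.2, w0)))).
  by move=> [[[x y] z] w] [[[x' y'] z'] w'] /=; rewrite nat_and; ring.
exact: delta_comm.
Qed.

Lemma commBC_D (Psi : T -> C) (f : 'I_d -> 'I_d -> C) :
  rhoBC Psi *m opmx (Lk prD rsD f) = opmx (Lk prD rsD f) *m rhoBC Psi.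
Proof.
apply: (comm_L hD1 hD2 hD3 (F := fun u v => (u == v)%:R)
  (K' := fun r r' => (r.1.1 == r'.1.1)%:R * \sum_x0 \sum_w0
     Psi (x0, r.1.2, r.2, w0) * Num.conj (Psi (x0, r'.1.2, r'.2, w0)))).
  by move=> [[[x y] z] w] [[[x' y'] z'] w'] /=; rewrite nat_and; ring.
exact: delta_comm.
Qed.

End Kernels.

Section Phi.
Variable R : realType.
Local Notation C := R[i].
Variables (D : finType) (phi : D -> C).
Hypothesis hphi : \sum_t phi t * Num.conj (phi t) = 1.

Lemma sum_phi (A B G : C) : \sum_t A * phi t * Num.conj (B * phi t) * G = A * Num.conj B * G.
Proof. by apply: sum_unit hphi _ => t; rewrite rmorphM /=; ring. Qed.
Lemma sum_phi0 (A B : C) : \sum_t A * phi t * Num.conj (B * phi t) = A * Num.conj B.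
Proof. by apply: sum_unit hphi _ => t; rewrite rmorphM /=; ring. Qed.
Lemma sum_phiL (A B G : C) : \sum_t phi t * A * Num.conj (phi t * B) * G = A * Num.conj B * G.
Proof. by apply: sum_unit hphi _ => t; rewrite rmorphM /=; ring. Qed.
Lemma sum_phiL0 (A B : C) : \sum_t phi t * A * Num.conj (phi t * B) = A * Num.conj B.
Proof. by apply: sum_unit hphi _ => t; rewrite rmorphM /=; ring. Qed.
End Phi.

Section Case4.
Variable R : realType.
Local Notation C := R[i].
Variables (a b c d : nat) (psi : 'I_a * 'I_b * 'I_c -> C) (phi : 'I_d -> C).
Hypotheses (hpsi : unit_vec psi) (hphi : unit_vec phi).
Definition Psi4 (t : idx a b c d) : C := psi t.1 * phi t.2.
Definition Phi4 (z : 'I_c) (x : 'I_a) (p : 'I_b * 'I_d) : C := Psi4 (x, p.1, z, p.2).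

Theorem case4 alpha beta : 0 < alpha -> 0 < beta ->
  0 < expect Psi4 (mxpowR (rhoAB Psi4) alpha *m mxpowR (rhoBC Psi4) beta).
Proof.
have Npsi := unit_sum hpsi; have Nphi := unit_sum hphi.
move=> ha hb.
refine (@combine R a b c d Psi4 _ _ _ _ _ (@prC a b c d) (@rsC a b c d) (@mkC a b c d) (@hC1 a b c d) (@hC2 a b c d) (@hC3 a b c d) (@prA a b c d) (@rsA a b c d) (@mkA a b c d) (@hA1 a b c d) (@hA2 a b c d) (@hA3 a b c d)
  Phi4 (fun (z : 'I_c) (x : 'I_a) (p : 'I_b * 'I_d) => (x, p.1, z, p.2) : idx a b c d)
  (fun t : idx a b c d => (t.1.2, t.1.1.1, (t.1.1.2, t.2))) _ _ _ _ _ _ _ _ _ _ _ _ alpha beta ha hb).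
- by move=> z x [y w].
- by case=> [[[x y] z] w].
- by [].
- by [].
- by move=> z z' x [y w].
- by [].
- by move=> z x x' [y w].
- by rewrite sum_pair -Npsi; apply: eq_bigr => p _; rewrite /Psi4 /= sum_phi0.
- rewrite rhoAB_k /rhoX Lmx_opmx !opmx_vec; apply: vecmx_eq => [[[[x y] z] w]].
  rewrite kAB_app (kapp_L (@hC1 a b c d) (@hC2 a b c d) (@hC3 a b c d)) /Phi4 /Psi4 /=.
  under eq_bigr => x' _ do under eq_bigr => y' _ do under eq_bigr => z0 _ do
    rewrite sum_phi //.
  transitivity (\sum_z' \sum_x0 \sum_y0
     psi (x0, y0, z) * Num.conj (psi (x0, y0, z')) * (psi (x, y, z') * phi w)); last first.
    apply: eq_bigr => z' _; rewrite mulr_suml; apply: eq_bigr => x0 _.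
    by rewrite sum_pair /= mulr_suml; apply: eq_bigr => y0 _; rewrite sum_phi0.
  rewrite [RHS]sum3_rot [RHS]sum3_rot; apply: eq_bigr => x' _; apply: eq_bigr => y' _.
  by apply: eq_bigr => z0 _; ring.
- rewrite Lmx_opmx; exact: commAB_C.
- rewrite rhoBC_k /rhoY Lmx_opmx !opmx_vec; apply: vecmx_eq => [[[[x y] z] w]].
  rewrite kBC_app (kapp_L (@hA1 a b c d) (@hA2 a b c d) (@hA3 a b c d)) /Phi4 /Psi4 /=.
  under eq_bigr => y' _ do under eq_bigr => z' _ do under eq_bigr => x0 _ do
    rewrite sum_phi //.
  transitivity (\sum_x' \sum_z0 \sum_y0
     psi (x, y0, z0) * Num.conj (psi (x', y0, z0)) * (psi (x', y, z) * phi w)); last first.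
    apply: eq_bigr => x' _; rewrite mulr_suml; apply: eq_bigr => z0 _.
    by rewrite sum_pair /= mulr_suml; apply: eq_bigr => y0 _; rewrite sum_phi0.
  rewrite sum3_rot; apply: eq_bigr => x0 _; rewrite exchange_big /=.
  by apply: eq_bigr => z0 _; apply: eq_bigr => y0 _; ring.
- rewrite Lmx_opmx; exact: commBC_A.
Qed.
End Case4.

Section Case1.
Variable R : realType.
Local Notation C := R[i].
Variables (a b c d : nat) (psi : 'I_b * 'I_c * 'I_d -> C) (phi : 'I_a -> C).
Hypotheses (hpsi : unit_vec psi) (hphi : unit_vec phi).
Definition Psi1 (t : idx a b c d) : C := psi (t.1.1.2, t.1.2, t.2) * phi t.1.1.1.
Definition Phi1 (y : 'I_b) (w : 'I_d) (p : 'I_a * 'I_c) : C := Psi1 (p.1, y, p.2, w).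

Theorem case1 alpha beta : 0 < alpha -> 0 < beta ->
  0 < expect Psi1 (mxpowR (rhoAB Psi1) alpha *m mxpowR (rhoBC Psi1) beta).
Proof.
have Npsi := unit_sum hpsi; have Nphi := unit_sum hphi.
pose fX := (fun y y' => \sum_w0 \sum_p Phi1 y w0 p * Num.conj (Phi1 y' w0 p)).
pose Kp := (fun r r' : 'I_a * 'I_c * 'I_d => (r.1.2 == r'.1.2)%:R * (r.2 == r'.2)%:R *
      (phi r.1.1 * Num.conj (phi r'.1.1))).
have kABf : forall i j, kAB Psi1 i j = fX (prB i) (prB j) * Kp (rsB i) (rsB j).
  move=> [[[x y] z] w] [[[x' y'] z'] w'] /=.
  rewrite /fX /Kp /Phi1 /Psi1 /= nat_and.
  under [in RHS]eq_bigr => w0 _ do rewrite sum_pair /= exchange_big /=.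
  under [in RHS]eq_bigr => w0 _ do under eq_bigr => z0 _ do rewrite sum_phi0 //.
  rewrite /prB /= [RHS]mulrC [X in _ = _ * X]exchange_big /= !mulr_sumr; apply: eq_bigr => z0 _.
  rewrite !mulr_sumr; apply: eq_bigr => w0 _.
  by rewrite !rmorphM /=; ring.
move=> ha hb.
refine (@combine R a b c d Psi1 _ _ _ _ _ (@prB a b c d) (@rsB a b c d) (@mkB a b c d)
  (@hB1 a b c d) (@hB2 a b c d) (@hB3 a b c d) (@prD a b c d) (@rsD a b c d) (@mkD a b c d)
  (@hD1 a b c d) (@hD2 a b c d) (@hD3 a b c d)
  Phi1 (fun (y : 'I_b) (w : 'I_d) (p : 'I_a * 'I_c) => (p.1, y, p.2, w) : idx a b c d)
  (fun t : idx a b c d => (t.1.1.2, t.2, (t.1.1.1, t.1.2))) _ _ _ _ _ _ _ _ _ _ _ _ alpha beta ha hb).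
- by move=> y w [x z].
- by case=> [[[x y] z] w].
- by [].
- by [].
- by move=> y y' w [x z].
- by [].
- by move=> y w w' [x z].
- rewrite (sum_site (@hA1 a b c d) (@hA2 a b c d) (@hA3 a b c d)) exchange_big /= -Npsi.
  apply: eq_bigr => [[[y z] w]] _; rewrite /Psi1 /=.
  exact: sum_phi0.
- rewrite rhoAB_k /rhoX Lmx_opmx !opmx_vec; apply: vecmx_eq => i.
  apply: (act_overlap (@hB1 a b c d) (@hB2 a b c d) (@hB3 a b c d) (F := fX) (K' := Kp) kABf).
  move=> y' [[x z] w]; rewrite /Kp /Psi1 /= sum_pair.
  transitivity (\sum_(p : 'I_a * 'I_c) (z == p.2)%:R *
      (phi p.1 * Num.conj (phi p.1) * (psi (y', z, w) * phi x))).
    apply: eq_bigr => [[x0 z0]] _ /=.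
    rewrite (eq_bigr (fun b0 => (w == b0)%:R * ((z == z0)%:R *
        (phi x0 * Num.conj (phi x0) * (psi (y', z, w) * phi x))))); first by rewrite sum_delta.
    move=> b0 _; case: (eqVneq w b0) => [<-|ne]; last by rewrite !mulr0n; ring.
    case: (eqVneq z z0) => [<-|nz]; last by rewrite !mulr0n; ring.
    by ring.
  rewrite sum_pair /=; under eq_bigr => x0 _ do rewrite sum_delta.
  by rewrite -mulr_suml Nphi mul1r.
- rewrite Lmx_opmx rhoAB_k.
  by apply: (comm_L (@hB1 a b c d) (@hB2 a b c d) (@hB3 a b c d) (F := fX) (K' := Kp) kABf).
- rewrite rhoBC_k /rhoY Lmx_opmx !opmx_vec; apply: vecmx_eq => [[[[x y] z] w]].
  rewrite kBC_app (kapp_L (@hD1 a b c d) (@hD2 a b c d) (@hD3 a b c d)) /Phi1 /Psi1 /=.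
  under eq_bigr => y' _ do under eq_bigr => z' _ do
    (rewrite exchange_big /=; under eq_bigr => w0 _ do rewrite sum_phi //).
  transitivity (\sum_w' \sum_y0 \sum_z0
     psi (y0, z0, w) * Num.conj (psi (y0, z0, w')) * (psi (y, z, w') * phi x)); last first.
    apply: eq_bigr => w' _; rewrite mulr_suml; apply: eq_bigr => y0 _.
    rewrite sum_pair /= exchange_big /= mulr_suml; apply: eq_bigr => z0 _.
    by rewrite sum_phi0.
  rewrite sum3_rot; apply: eq_bigr => w0 _; apply: eq_bigr => y' _.
  by apply: eq_bigr => z' _; ring.
- rewrite Lmx_opmx; exact: commBC_D.
Qed.
End Case1.

Section Case2.
Variable R : realType.
Local Notation C := R[i].
Variables (a b c d : nat) (psi : 'I_a * 'I_c * 'I_d -> C) (phi : 'I_b -> C).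
Hypotheses (hpsi : unit_vec psi) (hphi : unit_vec phi).
Definition Psi2 (t : idx a b c d) : C := psi (t.1.1.1, t.1.2, t.2) * phi t.1.1.2.
Definition Phi2 (x : 'I_a) (z : 'I_c) (p : 'I_b * 'I_d) : C := Psi2 (x, p.1, z, p.2).

Theorem case2 alpha beta : 0 < alpha -> 0 < beta ->
  0 < expect Psi2 (mxpowR (rhoAB Psi2) alpha *m mxpowR (rhoBC Psi2) beta).
Proof.
have Npsi := unit_sum hpsi; have Nphi := unit_sum hphi.
pose fX := (fun x x' => \sum_z \sum_p Phi2 x z p * Num.conj (Phi2 x' z p)).
pose Kp := (fun r r' : 'I_b * 'I_c * 'I_d => (r.1.2 == r'.1.2)%:R * (r.2 == r'.2)%:R *
      (phi r.1.1 * Num.conj (phi r'.1.1))).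
have kABf : forall i j, kAB Psi2 i j = fX (prA i) (prA j) * Kp (rsA i) (rsA j).
  move=> [[[x y] z] w] [[[x' y'] z'] w'] /=.
  rewrite /fX /Kp /Phi2 /Psi2 /prA /= nat_and.
  under [in RHS]eq_bigr => z0 _ do rewrite sum_pair /= exchange_big /=.
  under [in RHS]eq_bigr => z0 _ do under eq_bigr => w0 _ do rewrite sum_phi0 //.
  rewrite [RHS]mulrC !mulr_sumr; apply: eq_bigr => z0 _.
  rewrite !mulr_sumr; apply: eq_bigr => w0 _.
  by rewrite !rmorphM /=; ring.
pose fY := (fun z z' => \sum_x \sum_p Phi2 x z p * Num.conj (Phi2 x z' p)).
pose Kq := (fun r r' : 'I_a * 'I_b * 'I_d => (r.1.1 == r'.1.1)%:R * (r.2 == r'.2)%:R *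
      (phi r.1.2 * Num.conj (phi r'.1.2))).
have kBCf : forall i j, kBC Psi2 i j = fY (prC i) (prC j) * Kq (rsC i) (rsC j).
  move=> [[[x y] z] w] [[[x' y'] z'] w'] /=.
  rewrite /fY /Kq /Phi2 /Psi2 /prC /= nat_and.
  under [in RHS]eq_bigr => x0 _ do rewrite sum_pair /= exchange_big /=.
  under [in RHS]eq_bigr => x0 _ do under eq_bigr => w0 _ do rewrite sum_phi0 //.
  rewrite [RHS]mulrC !mulr_sumr; apply: eq_bigr => x0 _.
  rewrite !mulr_sumr; apply: eq_bigr => w0 _.
  by rewrite !rmorphM /=; ring.
move=> ha hb.
refine (@combine R a b c d Psi2 _ _ _ _ _ (@prA a b c d) (@rsA a b c d) (@mkA a b c d)
  (@hA1 a b c d) (@hA2 a b c d) (@hA3 a b c d) (@prC a b c d) (@rsC a b c d) (@mkC a b c d)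
  (@hC1 a b c d) (@hC2 a b c d) (@hC3 a b c d)
  Phi2 (fun (x : 'I_a) (z : 'I_c) (p : 'I_b * 'I_d) => (x, p.1, z, p.2) : idx a b c d)
  (fun t : idx a b c d => (t.1.1.1, t.1.2, (t.1.1.2, t.2))) _ _ _ _ _ _ _ _ _ _ _ _ alpha beta ha hb).
- by move=> x z [y w].
- by case=> [[[x y] z] w].
- by [].
- by [].
- by move=> x x' z [y w].
- by [].
- by move=> x z z' [y w].
- rewrite (sum_site (@hB1 a b c d) (@hB2 a b c d) (@hB3 a b c d)) exchange_big /= -Npsi.
  apply: eq_bigr => [[[x z] w]] _; rewrite /Psi2 /=.
  exact: sum_phi0.
- rewrite rhoAB_k /rhoX Lmx_opmx !opmx_vec; apply: vecmx_eq => i.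
  apply: (act_overlap (@hA1 a b c d) (@hA2 a b c d) (@hA3 a b c d) (F := fX) (K' := Kp) kABf).
  move=> x' [[y z] w]; rewrite /Kp /Psi2 /= sum_pair.
  transitivity (\sum_(p : 'I_b * 'I_c) (z == p.2)%:R *
      (phi p.1 * Num.conj (phi p.1) * (psi (x', z, w) * phi y))).
    apply: eq_bigr => [[y0 z0]] _ /=.
    rewrite (eq_bigr (fun b0 => (w == b0)%:R * ((z == z0)%:R *
        (phi y0 * Num.conj (phi y0) * (psi (x', z, w) * phi y))))); first by rewrite sum_delta.
    move=> b0 _; case: (eqVneq w b0) => [<-|ne]; last by rewrite !mulr0n; ring.
    case: (eqVneq z z0) => [<-|nz]; last by rewrite !mulr0n; ring.
    by ring.
  rewrite sum_pair /=; under eq_bigr => y0 _ do rewrite sum_delta.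
  by rewrite -mulr_suml Nphi mul1r.
- rewrite Lmx_opmx rhoAB_k.
  by apply: (comm_L (@hA1 a b c d) (@hA2 a b c d) (@hA3 a b c d) (F := fX) (K' := Kp) kABf).
- rewrite rhoBC_k /rhoY Lmx_opmx !opmx_vec; apply: vecmx_eq => i.
  apply: (act_overlap (@hC1 a b c d) (@hC2 a b c d) (@hC3 a b c d) (F := fY) (K' := Kq) kBCf).
  move=> z' [[x y] w]; rewrite /Kq /Psi2 /= sum_pair.
  transitivity (\sum_(p : 'I_a * 'I_b) (x == p.1)%:R *
      (phi p.2 * Num.conj (phi p.2) * (psi (x, z', w) * phi y))).
    apply: eq_bigr => [[x0 y0]] _ /=.
    rewrite (eq_bigr (fun b0 => (w == b0)%:R * ((x == x0)%:R *
        (phi y0 * Num.conj (phi y0) * (psi (x, z', w) * phi y))))); first by rewrite sum_delta.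
    move=> b0 _; case: (eqVneq w b0) => [<-|ne]; last by rewrite !mulr0n; ring.
    case: (eqVneq x x0) => [<-|nx]; last by rewrite !mulr0n; ring.
    by ring.
  rewrite sum_pair /= exchange_big /=; under eq_bigr => y0 _ do rewrite sum_delta.
  by rewrite -mulr_suml Nphi mul1r.
- rewrite Lmx_opmx rhoBC_k.
  by apply: (comm_L (@hC1 a b c d) (@hC2 a b c d) (@hC3 a b c d) (F := fY) (K' := Kq) kBCf).
Qed.
End Case2.

Section Case3.
Variable R : realType.
Local Notation C := R[i].
Variables (a b c d : nat) (psi : 'I_a * 'I_b * 'I_d -> C) (phi : 'I_c -> C).
Hypotheses (hpsi : unit_vec psi) (hphi : unit_vec phi).
Definition Psi3 (t : idx a b c d) : C := psi (t.1.1.1, t.1.1.2, t.2) * phi t.1.2.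
Definition Phi3 (w : 'I_d) (y : 'I_b) (p : 'I_a * 'I_c) : C := Psi3 (p.1, y, p.2, w).

Theorem case3 alpha beta : 0 < alpha -> 0 < beta ->
  0 < expect Psi3 (mxpowR (rhoAB Psi3) alpha *m mxpowR (rhoBC Psi3) beta).
Proof.
have Npsi := unit_sum hpsi; have Nphi := unit_sum hphi.
pose fY := (fun y y' => \sum_w \sum_p Phi3 w y p * Num.conj (Phi3 w y' p)).
pose Kq := (fun r r' : 'I_a * 'I_c * 'I_d => (r.1.1 == r'.1.1)%:R * (r.2 == r'.2)%:R *
      (phi r.1.2 * Num.conj (phi r'.1.2))).
have kBCf : forall i j, kBC Psi3 i j = fY (prB i) (prB j) * Kq (rsB i) (rsB j).
  move=> [[[x y] z] w] [[[x' y'] z'] w'] /=.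
  rewrite /fY /Kq /Phi3 /Psi3 /prB /= nat_and.
  under [in RHS]eq_bigr => w0 _ do rewrite sum_pair /=.
  under [in RHS]eq_bigr => w0 _ do under eq_bigr => x0 _ do rewrite sum_phi0 //.
  rewrite [RHS]mulrC [X in _ = _ * X]exchange_big /= !mulr_sumr; apply: eq_bigr => x0 _.
  rewrite !mulr_sumr; apply: eq_bigr => w0 _.
  by rewrite !rmorphM /=; ring.
move=> ha hb.
refine (@combine R a b c d Psi3 _ _ _ _ _ (@prD a b c d) (@rsD a b c d) (@mkD a b c d)
  (@hD1 a b c d) (@hD2 a b c d) (@hD3 a b c d) (@prB a b c d) (@rsB a b c d) (@mkB a b c d)
  (@hB1 a b c d) (@hB2 a b c d) (@hB3 a b c d)
  Phi3 (fun (w : 'I_d) (y : 'I_b) (p : 'I_a * 'I_c) => (p.1, y, p.2, w) : idx a b c d)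
  (fun t : idx a b c d => (t.2, t.1.1.2, (t.1.1.1, t.1.2))) _ _ _ _ _ _ _ _ _ _ _ _ alpha beta ha hb).
- by move=> w y [x z].
- by case=> [[[x y] z] w].
- by [].
- by [].
- by move=> w w' y [x z].
- by [].
- by move=> w y y' [x z].
- rewrite (sum_site (@hC1 a b c d) (@hC2 a b c d) (@hC3 a b c d)) exchange_big /= -Npsi.
  apply: eq_bigr => [[[x y] w]] _; rewrite /Psi3 /=.
  exact: sum_phi0.
- rewrite rhoAB_k /rhoX Lmx_opmx !opmx_vec; apply: vecmx_eq => [[[[x y] z] w]].
  rewrite kAB_app (kapp_L (@hD1 a b c d) (@hD2 a b c d) (@hD3 a b c d)) /Phi3 /Psi3 /=.
  under eq_bigr => x' _ do under eq_bigr => y' _ do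
    (rewrite exchange_big /=; under eq_bigr => w0 _ do rewrite sum_phi //).
  transitivity (\sum_w' \sum_y0 \sum_x0
     psi (x0, y0, w) * Num.conj (psi (x0, y0, w')) * (psi (x, y, w') * phi z)); last first.
    apply: eq_bigr => w' _; rewrite mulr_suml; apply: eq_bigr => y0 _.
    rewrite sum_pair /= mulr_suml; apply: eq_bigr => x0 _.
    by rewrite sum_phi0.
  rewrite sum3_rot; apply: eq_bigr => w0 _; rewrite exchange_big /=.
  by apply: eq_bigr => y' _; apply: eq_bigr => x' _; ring.
- rewrite Lmx_opmx; exact: commAB_D.
- rewrite rhoBC_k /rhoY Lmx_opmx !opmx_vec; apply: vecmx_eq => i.
  apply: (act_overlap (@hB1 a b c d) (@hB2 a b c d) (@hB3 a b c d) (F := fY) (K' := Kq) kBCf).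
  move=> y' [[x z] w]; rewrite /Kq /Psi3 /= sum_pair.
  transitivity (\sum_(p : 'I_a * 'I_c) (x == p.1)%:R *
      (phi p.2 * Num.conj (phi p.2) * (psi (x, y', w) * phi z))).
    apply: eq_bigr => [[x0 z0]] _ /=.
    rewrite (eq_bigr (fun b0 => (w == b0)%:R * ((x == x0)%:R *
        (phi z0 * Num.conj (phi z0) * (psi (x, y', w) * phi z))))); first by rewrite sum_delta.
    move=> b0 _; case: (eqVneq w b0) => [<-|ne]; last by rewrite !mulr0n; ring.
    case: (eqVneq x x0) => [<-|nx]; last by rewrite !mulr0n; ring.
    by ring.
  rewrite sum_pair /=; under eq_bigr => x0 _ do rewrite -mulr_sumr.
  by rewrite sum_delta -mulr_suml Nphi mul1r.
- rewrite Lmx_opmx rhoBC_k.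
  by apply: (comm_L (@hB1 a b c d) (@hB2 a b c d) (@hB3 a b c d) (F := fY) (K' := Kq) kBCf).
Qed.
End Case3.

Unset Implicit Arguments.
Theorem mainTheorem11 (R : realType) (a b c d : nat)
    (Psi : idx a b c d -> R[i]) :
  split_product Psi ->
  forall alpha beta : R, 0 < alpha -> 0 < beta ->
    0 < expect Psi (mxpowR (rhoAB Psi) alpha *m mxpowR (rhoBC Psi) beta) /\
    omega Psi alpha beta = 1.
Proof.
move=> hs alpha beta ha hb.
have hpos : 0 < expect Psi (mxpowR (rhoAB Psi) alpha *m mxpowR (rhoBC Psi) beta).
  case: hs => [[psi [phi [hp [hf he]]]]|[[psi [phi [hp [hf he]]]]|
               [[psi [phi [hp [hf he]]]]|[psi [phi [hp [hf he]]]]]]].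
  - have -> : Psi = Psi1 psi phi by apply: funext => [[[[x y] z] w]]; rewrite he.
    exact: case1.
  - have -> : Psi = Psi2 psi phi by apply: funext => [[[[x y] z] w]]; rewrite he.
    exact: case2.
  - have -> : Psi = Psi3 psi phi by apply: funext => [[[[x y] z] w]]; rewrite he.
    exact: case3.
  - have -> : Psi = Psi4 psi phi by apply: funext => [[[[x y] z] w]]; rewrite he.
    exact: case4.
split => //.
rewrite /omega gtr0_norm // divff //.
by rewrite gt_eqF.
Qed.
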